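(* Let $Q$ be a positive definite $d\times d$ matrix partitioned into blocks $(Q_{ij})_{i,j=1}^s$. The function $$f(w)=\lambda_{\min}\big(\sqrt{Q^{\rm ext}}\,D^{\rm ext}_w\sqrt{Q^{\rm ext}}\big),\quad Q^{\rm ext}=\mathrm{diag}(Q,1),\quad D^{\rm ext}_w=\mathrm{diag}\Big(w_1(Q_{11})^{-1},\dots,w_s(Q_{ss})^{-1},\ 1-\sum_{i=1}^sw_i\Big),$$ is concave on $\Delta_s=\{w\in\mathbb{R}^s: w_i>0,\ 1-w_1-\dots-w_s>0\}$.
   Context: $\sqrt{\cdot}$ denotes the symmetric positive definite square root and $\lambda_{\min}$ the smallest eigenvalue. *)

(* Defs.v *)
From HB Require Import structures.
From mathcomp Require Import all_boot all_order all_algebra.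
From mathcomp Require Import boolp classical_sets reals.
Set Implicit Arguments. Unset Strict Implicit. Unset Printing Implicit Defensive.
Import Order.TTheory GRing.Theory Num.Theory.
Local Open Scope ring_scope.

Section Defs.
Variable R : realType.

Definition symmetric_mx n (A : 'M[R]_n) : Prop := A^T = A.

Definition posdef_mx n (A : 'M[R]_n) : Prop :=
  symmetric_mx A /\ forall x : 'cV[R]_n, x != 0 -> 0 < (x^T *m A *m x) 0 0.

Definition psd_mx n (A : 'M[R]_n) : Prop :=
  symmetric_mx A /\ forall x : 'cV[R]_n, 0 <= (x^T *m A *m x) 0 0.

(* the symmetric positive (semi)definite square root: the (unique) symmetric
   PSD matrix S with S *m S = A (when it exists; 0 otherwise) *)
Definition sqrtm n (A : 'M[R]_n) : 'M[R]_n :=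
  match pselect (exists S : 'M[R]_n, psd_mx S /\ S *m S = A) with
  | left e => projT1 (cid e)
  | right _ => 0
  end.

(* smallest eigenvalue (eigenvalues of a real symmetric matrix are real) *)
Definition lambda_min n (A : 'M[R]_n) : R :=
  inf [set a : R | eigenvalue A a].

Definition open_simplex s : set 'rV[R]_s :=
  [set w | (forall i, 0 < w 0 i) /\ 0 < 1 - \sum_(i < s) w 0 i].

Definition Dw s (n : 'I_s -> nat) (Q : 'M[R]_(\sum_(i < s) n i))
  (w : 'rV[R]_s) : 'M[R]_(\sum_(i < s) n i) :=
  \mxdiag_(i < s) (w 0 i *: invmx (submxblock Q i i)).

Definition Qext s (n : 'I_s -> nat) (Q : 'M[R]_(\sum_(i < s) n i))
  : 'M[R]_(\sum_(i < s) n i + 1) :=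
  block_mx Q 0 0 1%:M.

Definition Dext s (n : 'I_s -> nat) (Q : 'M[R]_(\sum_(i < s) n i))
  (w : 'rV[R]_s) : 'M[R]_(\sum_(i < s) n i + 1) :=
  block_mx (Dw Q w) 0 0 (1 - \sum_(i < s) w 0 i)%:M.

Definition fQ s (n : 'I_s -> nat) (Q : 'M[R]_(\sum_(i < s) n i))
  (w : 'rV[R]_s) : R :=
  lambda_min (sqrtm (Qext Q) *m Dext Q w *m sqrtm (Qext Q)).

End Defs.

(* Main.v *)
Require Import Defs.
From HB Require Import structures.
From mathcomp Require Import all_boot all_order all_algebra.
From mathcomp Require Import boolp classical_sets reals.
From mathcomp Require Import topology normedtype derive.
From mathcomp Require Import ring lra.
Import Order.TTheory GRing.Theory Num.Theory.
Import numFieldNormedType.Exports.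
Local Open Scope classical_set_scope.
Local Open Scope ring_scope.
Set Implicit Arguments. Unset Strict Implicit. Unset Printing Implicit Defensive.

Section S.
Variable R : realType.

Definition qf n (M : 'M[R]_n) (x : 'rV[R]_n) : R := (x *m M *m x^T) 0 0.

Lemma qfE n (M : 'M[R]_n) (x : 'rV[R]_n) : qf M x = \sum_(i < n) \sum_(j < n) x 0 i * M i j * x 0 j.
Proof.
rewrite /qf !mxE exchange_big /=; apply: eq_bigr => i _.
by rewrite !mxE big_distrl.
Qed.

Lemma qf1 n (x : 'rV[R]_n) : qf 1%:M x = \sum_i x 0 i ^+ 2.
Proof.
rewrite qfE; apply: eq_bigr => i _; rewrite (bigD1 i) //= big1 ?addr0.
  by rewrite mxE eqxx mulr1 expr2.
by move=> j ji; rewrite mxE eq_sym (negbTE ji) mulr0 mul0r.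
Qed.

Lemma sum_cont n (F : 'I_n -> 'rV[R]_n -> R) :
  (forall i, continuous (F i)) -> continuous (fun x => \sum_i F i x).
Proof.
move=> Fc; rewrite unlock /=.
elim: (index_enum _) => [|a l IH] x /=.
  exact: cst_continuous.
by apply: continuousD; [exact: Fc | exact: IH].
Qed.

Lemma qf_cont n (M : 'M[R]_n) : continuous (qf M).
Proof.
have -> : qf M = (fun x => \sum_(i < n) \sum_(j < n) x 0 i * M i j * x 0 j).
  by apply: funext => x; rewrite qfE.
apply: sum_cont => i; apply: sum_cont => j x.
apply: (@continuousM _ _ (fun x : 'rV[R]_n => x 0 i * M i j) (fun x => x 0 j)); last exact: coord_continuous.
apply: (@continuousM _ _ (fun x : 'rV[R]_n => x 0 i) (fun=> M i j)); first exact: coord_continuous.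
exact: cst_continuous.
Qed.


Lemma qfZ n (M : 'M[R]_n) a x : qf M (a *: x) = a ^+ 2 * qf M x.
Proof.
rewrite !qfE mulr_sumr; apply: eq_bigr => i _; rewrite mulr_sumr; apply: eq_bigr => j _.
by rewrite !mxE; ring.
Qed.

Lemma qf1_ge0 n (x : 'rV[R]_n) : 0 <= qf 1%:M x.
Proof. by rewrite qf1; apply: sumr_ge0 => i _; exact: sqr_ge0. Qed.

Lemma qf1_eq0 n (x : 'rV[R]_n) : qf 1%:M x = 0 -> x = 0.
Proof.
rewrite qf1 => /eqP; rewrite psumr_eq0 => [/allP H|i _]; last exact: sqr_ge0.
apply/rowP => i; rewrite mxE; apply/eqP; rewrite -sqrf_eq0.
exact: (implyP (H i (mem_index_enum _))).
Qed.

Lemma qf0 n (M : 'M[R]_n) : qf M 0 = 0.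
Proof. by rewrite /qf !mul0mx mxE. Qed.

Lemma rayleigh_min n (M : 'M[R]_n) : (0 < n)%N ->
  exists x0, qf 1%:M x0 = 1 /\ forall x, qf M x0 * qf 1%:M x <= qf M x.
Proof.
move=> n0.
pose S := [set x : 'rV[R]_n | qf 1%:M x = 1].
have cS : compact S.
  have H := rV_compact (n := n) (A := fun=> `[-1, 1]%classic : set R) (fun=> @segment_compact _ _ _).
  apply: (subclosed_compact _ H).
  - apply: (@preimage_closed _ _ (qf 1%:M) [set x | x = 1]); last exact: closed_eq.
    by move=> y _; exact: qf_cont.
  - move=> v /= Sv i; rewrite /= in_itv /= -ler_norml.
    rewrite -(ler_pXn2r (_ : (0 < 2)%N)) ?nnegrE ?normr_ge0 // real_normK ?num_real //.
    rewrite expr1n -Sv qf1 (bigD1 i) //= lerDl.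
    by apply: sumr_ge0 => j _; exact: sqr_ge0.
have S0 : S !=set0.
  exists (\row_j ((j == Ordinal n0)%:R : R)); rewrite /S /= qf1.
  rewrite (bigD1 (Ordinal n0)) //= big1 ?mxE ?eqxx ?addr0 ?expr1n //.
  by move=> j /negbTE jn; rewrite mxE jn expr0n.
have [c cSc cmin] := EVT_min_rV S0 cS (continuous_subspaceT (A := S) (@qf_cont _ M)).
have Sc : qf 1%:M c = 1 by move: cSc; rewrite inE.
exists c; split => // x.
have := qf1_ge0 x; rewrite le0r => /orP[/eqP/qf1_eq0 xe|qpos].
  by move: xe => ->; rewrite !qf0 mulr0.
have x0 : qf 1%:M x != 0 by rewrite gt_eqF.
pose r := Num.sqrt (qf 1%:M x).
have r0 : 0 < r by rewrite sqrtr_gt0.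
have rr : r ^+ 2 = qf 1%:M x by rewrite sqr_sqrtr // ltW.
have := cmin (r^-1 *: x); rewrite !qfZ inE /S /= qfZ exprVn rr mulVf //.
move=> /(_ erefl); rewrite -rr ler_pdivlMl ?exprn_gt0 // mulrC //.
Qed.

Definition bil n (M : 'M[R]_n) (u v : 'rV[R]_n) : R := (u *m M *m v^T) 0 0.

Lemma bilC n (M : 'M[R]_n) u v : M^T = M -> bil M u v = bil M v u.
Proof.
move=> sM; rewrite /bil.
have E : (u *m M *m v^T) 0 0 = ((u *m M *m v^T)^T) 0 0 by rewrite [RHS]mxE.
rewrite E.
by rewrite !trmx_mul trmxK sM mulmxA.
Qed.

Lemma qf_add n (M : 'M[R]_n) u v : M^T = M ->
  qf M (u + v) = qf M u + 2 * bil M u v + qf M v.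
Proof.
move=> sM.
have E (A B : 'M[R]_1) : (A + B) 0 0 = A 0 0 + B 0 0 by rewrite mxE.
rewrite /qf linearD /= !(mulmxDl, mulmxDr) !E.
have := bilC u v sM; rewrite /bil => ->; ring.
Qed.

Lemma bilZr n (M : 'M[R]_n) u t v : bil M u (t *: v) = t * bil M u v.
Proof. by rewrite /bil linearZ /= -scalemxAr mxE. Qed.

Lemma qfB n (M : 'M[R]_n) mu x : qf (M - mu%:M) x = qf M x - mu * qf 1%:M x.
Proof.
rewrite /qf mulmxBr mulmxBl mulmx1 mul_mx_scalar -scalemxAl !mxE; congr (_ - _).
Qed.

Lemma rayleigh_eig n (M : 'M[R]_n) : (0 < n)%N -> M^T = M ->
  exists2 mu, eigenvalue M mu & forall x, mu * qf 1%:M x <= qf M x.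
Proof.
move=> n0 sM; have [c [c1 cmin]] := rayleigh_min M n0.
set mu := qf M c; exists mu => //.
set B := M - mu%:M.
have sB : B^T = B by rewrite /B linearB /= sM tr_scalar_mx.
have Bge0 x : 0 <= qf B x by rewrite /B qfB subr_ge0.
have Bc : qf B c = 0 by rewrite /B qfB c1 mulr1 subrr.
set y := c *m B.
have cy : bil B c y = qf 1%:M y by rewrite /bil /qf mulmx1.
set a := qf 1%:M y; set b := qf B y.
have a0 : 0 <= a := qf1_ge0 y.
have b0 : 0 <= b := Bge0 y.
pose t := - a / (b + 1).
have := Bge0 (c + t *: y); rewrite qf_add // Bc bilZr qfZ cy -/a -/b add0r => g0.
have b1 : b + 1 != 0 by rewrite gt_eqF //; lra.
have key : (b + 1) ^+ 2 * (2 * (t * a) + t ^+ 2 * b) = - (a ^+ 2 * (b + 2)).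
  by rewrite /t; field.
have : (b + 1) ^+ 2 * (2 * (t * a) + t ^+ 2 * b) >= 0 by apply: mulr_ge0 => //; exact: sqr_ge0.
rewrite key oppr_ge0 => H.
have a2 : a = 0 by nra.
have y0 : y = 0 by apply: qf1_eq0.
apply/eigenvalueP; exists c.
  by move: y0; rewrite /y /B mulmxBr mul_mx_scalar => /eqP; rewrite subr_eq0 => /eqP.
by apply/eqP => c0; move: c1; rewrite c0 qf0 => /eqP; rewrite eq_sym oner_eq0.
Qed.

Lemma qf_eig n (M : 'M[R]_n) a v : v *m M = a *: v -> qf M v = a * qf 1%:M v.
Proof. by move=> e; rewrite /qf e mulmx1 -scalemxAl mxE. Qed.

Lemma qf1_gt0 n (v : 'rV[R]_n) : v != 0 -> 0 < qf 1%:M v.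
Proof.
move=> v0; rewrite lt0r qf1_ge0 andbT; apply: contra v0 => /eqP/qf1_eq0 ->.
by [].
Qed.

Lemma lmin_spec n (M : 'M[R]_n) : (0 < n)%N -> M^T = M ->
  (forall x, lambda_min M * qf 1%:M x <= qf M x) /\ exists2 v, v != 0 & qf M v = lambda_min M * qf 1%:M v.
Proof.
move=> n0 sM; have [mu eig lb] := rayleigh_eig n0 sM.
have lbE : lbound [set a : R | eigenvalue M a] mu.
  move=> a /= /eigenvalueP [v e v0].
  have := lb v; rewrite (qf_eig e) ler_pM2r //; exact: qf1_gt0.
have -> : lambda_min M = mu.
  apply/eqP; rewrite eq_le; apply/andP; split.
    by apply: ge_inf => //; exists mu.
  by apply: lb_le_inf => //; exists mu.
split => //.
have /eigenvalueP [v e v0] := eig.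
by exists v => //; exact: qf_eig.
Qed.

Lemma mxdiag_scale (p : nat) (p_ : 'I_p -> nat) (t : R) (B : forall i, 'M[R]_(p_ i)) :
  \mxdiag_(i < p) (t *: B i) = t *: \mxdiag_(i < p) B i.
Proof.
rewrite -mul_scalar_mx -(@mxdiagZ _ _ p_ t) [X in _ *m X]/mxdiag mul_mxdiag_mxblock /mxdiag.
apply: eq_mxblock => i j; case: eqVneq => [<-|_]; last by rewrite mulmx0.
by rewrite !conform_mx_id mul_scalar_mx.
Qed.

Lemma qf_lin n (A B : 'M[R]_n) t u x :
  qf (t *: A + u *: B) x = t * qf A x + u * qf B x.
Proof.
have E (C D : 'M[R]_1) : (C + D) 0 0 = C 0 0 + D 0 0 by rewrite mxE.
by rewrite /qf mulmxDr mulmxDl E -!scalemxAr -!scalemxAl !mxE.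
Qed.

Lemma final_step (t l1 l2 l q A1 A2 : R) : 0 < q ->
  t * (l1 * q) <= t * A1 -> (1 - t) * (l2 * q) <= (1 - t) * A2 ->
  t * A1 + (1 - t) * A2 = l * q -> t * l1 + (1 - t) * l2 <= l.
Proof.
move=> q0 h1 h2 hv; rewrite -(ler_pM2r q0) -hv.
have -> : (t * l1 + (1 - t) * l2) * q = t * (l1 * q) + (1 - t) * (l2 * q) by ring.
exact: lerD.
Qed.

Lemma sqrtm_sym n (A : 'M[R]_n) : (sqrtm A)^T = sqrtm A.
Proof.
rewrite /sqrtm; case: pselect => [e|_]; last exact: trmx0.
by have [[sS _] _] := projT2 (cid e).
Qed.

End S.

Unset Implicit Arguments.

Theorem proposition3 (R : realType) (s : nat) (n : 'I_s -> nat)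
  (Q : 'M[R]_(\sum_(i < s) n i)) :
  (forall i, (0 < n i)%N) ->
  posdef_mx Q ->
  forall (w1 w2 : 'rV[R]_s) (t : R),
    open_simplex w1 -> open_simplex w2 -> 0 <= t <= 1 ->
    t * fQ Q w1 + (1 - t) * fQ Q w2 <= fQ Q (t *: w1 + (1 - t) *: w2).
Proof.
move=> _ [sQ _] w1 w2 t _ _ /andP[t0 t1].
set S := sqrtm (Qext Q).
have sS : S^T = S := sqrtm_sym _.
have sD w : (Dext Q w)^T = Dext Q w.
  rewrite /Dext tr_block_mx !trmx0 tr_scalar_mx; congr block_mx.
  rewrite /Dw tr_mxdiag; apply: eq_mxdiag => i.
  by rewrite linearZ /= trmx_inv tr_submxblock sQ.
have linD : Dext Q (t *: w1 + (1 - t) *: w2) = t *: Dext Q w1 + (1 - t) *: Dext Q w2.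
  rewrite /Dext !scale_block_mx add_block_mx !scaler0 !addr0; congr block_mx.
    rewrite /Dw -!mxdiag_scale -mxdiagD; apply: eq_mxdiag => i.
    by rewrite !mxE scalerDl !scalerA.
  rewrite !scale_scalar_mx -raddfD /=.
  have -> : \sum_(i < s) (t *: w1 + (1 - t) *: w2) 0 i =
      t * \sum_(i < s) w1 0 i + (1 - t) * \sum_(i < s) w2 0 i.
    by rewrite !mulr_sumr -big_split /=; apply: eq_bigr => i _; rewrite !mxE.
  by congr (scalar_mx _); ring.
set Mw := S *m Dext Q (t *: w1 + (1 - t) *: w2) *m S.
have linM : Mw = t *: (S *m Dext Q w1 *m S) + (1 - t) *: (S *m Dext Q w2 *m S).
  by rewrite /Mw linD mulmxDr mulmxDl -!scalemxAr -!scalemxAl.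
have symM w : (S *m Dext Q w *m S)^T = S *m Dext Q w *m S.
  by rewrite !trmx_mul sS sD mulmxA.
have N0 : (0 < \sum_(i < s) n i + 1)%N by rewrite addn1.
rewrite /fQ -/S -/Mw.
have [_ [v v0 hv]] := lmin_spec N0 (symM (t *: w1 + (1 - t) *: w2)).
have [lb1 _] := lmin_spec N0 (symM w1).
have [lb2 _] := lmin_spec N0 (symM w2).
have q0 := qf1_gt0 v0.
have h1 := ler_wpM2l t0 (lb1 v).
have h2 : (1 - t) * (lambda_min (S *m Dext Q w2 *m S) * qf 1%:M v) <=
          (1 - t) * qf (S *m Dext Q w2 *m S) v.
  by apply: ler_wpM2l (lb2 v); rewrite subr_ge0.
move: hv; rewrite -/Mw linM qf_lin => hv.
exact: (final_step q0 h1 h2 hv).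
Qed.
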